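(* Let $(X,\langle\cdot,\cdot\rangle)$ be a real inner product space. For every $n\ge 2$, the $n$-iterated $2$-inner product $(\cdot,\cdot\mid\cdot,\ldots,\cdot)_*:X^{n+1}\to\mathbb{R}$ is a weak $n$-inner product on $X$.
   Context: The $n$-iterated $2$-inner product is defined recursively: for $n=2$, $(x,y\mid z)_*:=\langle x,y\rangle\langle z,z\rangle-\langle x,z\rangle\langle z,y\rangle$; for $n\ge3$ and $x,y,x_2,\ldots,x_n\in X$, $(x,y\mid x_n,\ldots,x_2)_*:=(x,y\mid x_{n-1},\ldots,x_2)_*\,(x_n,x_n\mid x_{n-1},\ldots,x_2)_*-(x,x_n\mid x_{n-1},\ldots,x_2)_*\,(x_n,y\mid x_{n-1},\ldots,x_2)_*$. A weak $n$-inner product ($n\ge2$) on a real vector space $X$ is a function $(\cdot,\cdot\mid\cdot,\ldots,\cdot):X^{n+1}\to\mathbb{R}$, written $(x,y\mid x_n,\ldots,x_2)$, such that for all $x,x',y,x_2,\ldots,x_n\in X$ and $\alpha\in\mathbb{R}$: (P1) $(x,x\mid x_n,\ldots,x_2)\ge 0$, with equality if and only if $x,x_2,\ldots,x_n$ are linearly dependent; (P2) $(x,x\mid x_n,\ldots,x_2)=(x_n,x_n\mid x,x_{n-1},\ldots,x_2)$; (P3) $(x,y\mid x_n,\ldots,x_2)=(y,x\mid x_n,\ldots,x_2)$; (P4) $(\alpha x,y\mid x_n,\ldots,x_2)=\alpha(x,y\mid x_n,\ldots,x_2)$; (P5) $(x+x',y\mid x_n,\ldots,x_2)=(x,y\mid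 x_n,\ldots,x_2)+(x',y\mid x_n,\ldots,x_2)$. *)

(* Defs.v *)
From HB Require Import structures.
From mathcomp Require Import all_boot all_order all_algebra.
From mathcomp Require Import reals.
Set Implicit Arguments. Unset Strict Implicit. Unset Printing Implicit Defensive.
Import Order.TTheory GRing.Theory Num.Theory.
Local Open Scope ring_scope.

Definition is_inner_product (R : realType) (X : lmodType R) (ip : X -> X -> R) : Prop :=
  [/\ (forall x y, ip x y = ip y x),
      (forall a x y, ip (a *: x) y = a * ip x y),
      (forall x x' y, ip (x + x') y = ip x y + ip x' y),
      (forall x, 0 <= ip x x) &
      (forall x, ip x x = 0 -> x = 0)].

(* The list s = [:: x_n; x_(n-1); ...; x_2]
   (of length n-1) encodes the arguments after the bar:
     iter2ip ip x y s = (x, y | x_n, ..., x_2)_* .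
   The empty list gives <x,y>, so that for s = [:: z] one gets exactly
   <x,y><z,z> - <x,z><z,y>, and the recursive clause is the paper's. *)
Fixpoint iter2ip (R : realType) (X : lmodType R) (ip : X -> X -> R)
    (x y : X) (s : seq X) : R :=
  match s with
  | [::] => ip x y
  | z :: t => iter2ip ip x y t * iter2ip ip z z t - iter2ip ip x z t * iter2ip ip z y t
  end.

Definition lin_dep (R : realType) (X : lmodType R) (l : seq X) : Prop :=
  exists c : 'I_(size l) -> R,
    (exists i, c i != 0) /\ \sum_(i < size l) c i *: l`_i = 0.

(* Weak n-inner product: f x y s = (x, y | x_n, ..., x_2) where
   s = [:: x_n; ...; x_2] has length n-1. *)
Definition is_weak_n_inner_product (R : realType) (X : lmodType R) (n : nat)
    (f : X -> X -> seq X -> R) : Prop :=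
  [/\ (forall x s, size s = n.-1 ->
                  0 <= f x x s /\ (f x x s = 0 <-> lin_dep (x :: s))),
      (forall x xn t, size t = n.-2 -> f x x (xn :: t) = f xn xn (x :: t)),
      (forall x y s, size s = n.-1 -> f x y s = f y x s),
      (forall a x y s, size s = n.-1 -> f (a *: x) y s = a * f x y s) &
      (forall x x' y s, size s = n.-1 -> f (x + x') y s = f x y s + f x' y s)].

(* Main.v *)
Require Import Defs.
From HB Require Import structures.
From mathcomp Require Import all_boot all_order all_algebra.
From mathcomp Require Import reals.
From mathcomp Require Import ring lra.
Set Implicit Arguments. Unset Strict Implicit. Unset Printing Implicit Defensive.
Import Order.TTheory GRing.Theory Num.Theory.
Local Open Scope ring_scope.
Section LD.
Variables (R : realType) (X : lmodType R).

Lemma L1 (x : X) (s : seq X) : lin_dep (x :: s) <-> exists a (c : 'I_(size s) -> R),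
  (a != 0 \/ exists i, c i != 0) /\ a *: x + \sum_(i < size s) c i *: s`_i = 0.
Proof.
split.
- case=> c [[i ci] hs]; exists (c ord0), (fun j => c (lift ord0 j)); split.
  + by move: ci; case: (unliftP ord0 i) => [j ->|->] ci; [right; exists j | left].
  + by move: hs; rewrite big_ord_recl.
- case=> a [c [hnz hs]].
  exists (fun i : 'I_(size s).+1 => if unlift ord0 i is Some j then c j else a); split.
  + case: hnz => [ha|[j cj]]; [exists ord0; by rewrite unlift_none | exists (lift ord0 j); by rewrite liftK].
  + rewrite big_ord_recl unlift_none.
    by under eq_bigr => j _ do rewrite liftK.
Qed.

Lemma L2 (x z : X) (t : seq X) : lin_dep (x :: z :: t) <-> exists a b (c : 'I_(size t) -> R),
  (a != 0 \/ b != 0 \/ exists i, c i != 0) /\ a *: x + b *: z + \sum_(i < size t) c i *: t`_i = 0.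
Proof.
split.
- case=> c [[i ci] hs]; exists (c ord0), (c (lift ord0 ord0)), (fun j => c (lift ord0 (lift ord0 j))); split.
  + move: ci; case: (unliftP ord0 i) => [j ->|->] ci; last by left.
    by move: ci; case: (unliftP ord0 j) => [k ->|->] ci; right; [right; exists k| left].
  + by move: hs; rewrite big_ord_recl big_ord_recl addrA.
- case=> a [b [c [hnz hs]]].
  exists (fun i : 'I_(size t).+2 => if unlift ord0 i is Some j then
     (if unlift ord0 j is Some k then c k else b) else a); split.
  + case: hnz => [ha|[hb|[j cj]]].
    * by exists ord0; rewrite unlift_none.
    * by exists (lift ord0 ord0); rewrite liftK unlift_none.
    * by exists (lift ord0 (lift ord0 j)); rewrite !liftK.
  + rewrite big_ord_recl big_ord_recl unlift_none liftK unlift_none addrA.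
    by under eq_bigr => j _ do rewrite !liftK.
Qed.
End LD.
Section G.
Variables (R : realType) (X : lmodType R).

Definition good (g : X -> X -> R) (t : seq X) :=
  [/\ (forall x y, g x y = g y x),
      (forall a x y, g (a *: x) y = a * g x y),
      (forall x x' y, g (x + x') y = g x y + g x' y),
      (forall x, 0 <= g x x) &
      (forall x, g x x = 0 <-> lin_dep (x :: t))].

Section Step.
Variables (g : X -> X -> R) (t : seq X) (z : X).
Hypothesis (gd : good g t).

Let gC : forall x y, g x y = g y x. Proof. by case: gd. Qed.
Let gZl : forall a x y, g (a *: x) y = a * g x y. Proof. by case: gd. Qed.
Let gDl : forall x x' y, g (x + x') y = g x y + g x' y. Proof. by case: gd. Qed.
Let g0 : forall x, 0 <= g x x. Proof. by case: gd. Qed.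
Let gz : forall x, g x x = 0 <-> lin_dep (x :: t). Proof. by case: gd. Qed.
Let gZr a x y : g x (a *: y) = a * g x y. Proof. by rewrite gC gZl gC. Qed.
Let gDr x y y' : g x (y + y') = g x y + g x y'. Proof. by rewrite gC gDl gC (gC y' x). Qed.
Let gNl x y : g (- x) y = - g x y. Proof. by rewrite -scaleN1r gZl mulN1r. Qed.
Let gNr x y : g x (- y) = - g x y. Proof. by rewrite gC gNl gC. Qed.

Lemma nullg w v : g w w = 0 -> g w v = 0.
Proof.
move=> hw.
have h := g0 ((g v v + 1) *: w - g w v *: v).
rewrite !(gDl, gDr, gZl, gZr, gNl, gNr) hw (gC v w) in h.
have hv := g0 v.
have : g w v * g w v <= 0 by nra.
move=> hle; have := sqr_ge0 (g w v); rewrite expr2 => hs.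
have : g w v * g w v == 0 by rewrite eq_le hle hs.
by rewrite mulf_eq0 orbb => /eqP.
Qed.

Definition gs x y := g x y * g z z - g x z * g z y.

Lemma gs_good : good gs (z :: t).
Proof.
rewrite /gs; split.
- by move=> x y; rewrite (gC x z) (gC z y) (gC x y); ring.
- by move=> a x y; rewrite !gZl; ring.
- by move=> x x' y; rewrite !gDl; ring.
- move=> x.
  have hw := g0 (g z z *: x - g x z *: z).
  rewrite !(gDl, gDr, gZl, gZr, gNl, gNr) (gC z x) in hw.
  have [hr|hr] := eqVneq (g z z) 0.
    by rewrite (gC x z) (nullg x hr) hr; lra.
  have hr0 : 0 < g z z by rewrite lt_def hr g0.
  rewrite (gC z x).
  have : 0 <= g z z * (g x x * g z z - g x z * g x z) by nra.
  by rewrite pmulr_rge0.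
- move=> x; split.
  + move=> hf; apply/L2.
    have [hr|hr] := eqVneq (g z z) 0.
      have /L1 [b [c [hnz hs]]] := (proj1 (gz z) hr).
      exists 0, b, c; split; first by right.
      by rewrite scale0r add0r.
    set w := g z z *: x - g x z *: z.
    have hw : g w w = 0.
      rewrite /w !(gDl, gDr, gZl, gZr, gNl, gNr) (gC z x).
      rewrite (gC z x) in hf.
      transitivity (g z z * (g x x * g z z - g x z * g x z)); first by ring.
      by rewrite hf mulr0.
    have /L1 [c0 [c [hnz hs]]] := (proj1 (gz w) hw).
    exists (c0 * g z z), (- (c0 * g x z)), c; split.
      case: hnz => [h|h]; last by right; right.
      by left; rewrite mulf_neq0.
    by rewrite scaleNr; move: hs; rewrite /w scalerBr !scalerA.
  + move/L2 => [a [b [c [hnz hs]]]].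
    have [hab|hab] : (a != 0 \/ b != 0) \/ (a = 0 /\ b = 0).
      have [ha|ha] := eqVneq a 0; last by left; left.
      have [hb|hb] := eqVneq b 0; last by left; right.
      by right.
    * set w := a *: x + b *: z.
      have hw : g w w = 0.
        apply/gz/L1; exists 1, c; split; first by left; exact: oner_neq0.
        by rewrite scale1r.
      have h1 := nullg x hw; have h2 := nullg z hw.
      rewrite /w !(gDl, gZl) in h1 h2.
      rewrite (gC z x) in h2 *.
      set d := g x x * g z z - g x z * g x z.
      have da : d * a = 0.
        transitivity (g z z * (a * g x x + b * g z x) - g x z * (a * g x z + b * g z z)); first by rewrite /d (gC z x); ring.
        by rewrite h1 h2 !mulr0 subr0.
      have db : d * b = 0.
        transitivity (g x x * (a * g x z + b * g z z) - g x z * (a * g x x + b * g z x)); first by rewrite /d (gC z x); ring.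
        by rewrite h1 h2 !mulr0 subr0.
      case: hab => hab.
      - by move/eqP: da; rewrite mulf_eq0 (negbTE hab) orbF => /eqP.
      - by move/eqP: db; rewrite mulf_eq0 (negbTE hab) orbF => /eqP.
    * case: hab => ha hb; subst a b.
      case: hnz => [/eqP//|[/eqP//|hc]].
      have hl v : lin_dep (v :: t).
        apply/L1; exists 0, c; split; first by right.
        by rewrite scale0r add0r; move: hs; rewrite !scale0r !add0r.
      have hx := proj2 (gz x) (hl x).
      have hz := proj2 (gz z) (hl z).
      by rewrite hx hz (nullg z hx); ring.
Qed.
End Step.

Lemma all_good (ip : X -> X -> R) (Hip : is_inner_product ip) (t : seq X) :
  good (fun x y => iter2ip ip x y t) t.
Proof.
elim: t => [|z t IH].
  case: Hip => hC hZ hD h0 hz; split => //= x; split.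
  - move/hz => ->; apply/L1; exists 1, (fun i => 0); split; first by left; exact: oner_neq0.
    by rewrite scaler0 big_ord0 addr0.
  - case/L1 => a [c [[ha|[[i hi]]] hs]] //.
    move: hs; rewrite big_ord0 addr0 => /eqP; rewrite scaler_eq0 (negbTE ha) /= => /eqP ->.
    by rewrite -(scale0r (0 : X)) hZ mul0r.
exact: (gs_good z IH).
Qed.
End G.

Theorem theorem2p4 (R : realType) (X : lmodType R) (ip : X -> X -> R)
    (Hip : is_inner_product ip) (n : nat) (hn : (2 <= n)%N) :
  is_weak_n_inner_product n (iter2ip ip).
Proof.
have G := all_good Hip.
split.
- move=> x s _; case: (G s) => _ _ _ h0 hz; split; [exact: h0 | exact: hz].
- move=> x xn t _ /=; case: (G t) => hC _ _ _ _.
  by rewrite (hC x xn); ring.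
- by move=> x y s _; case: (G s).
- by move=> a x y s _; case: (G s).
- by move=> x x' y s _; case: (G s).
Qed.
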